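(* Let $P_k$ denote the $k$-th Legendre polynomial, $k\in\mathbb N$. For every $n\in\mathbb N$, $j\in\{1,\dots,n\}$, $\mathfrak t_n\in\mathbb T(n)$, $\boldsymbol\varphi\in[0,\pi]^{n-1}$, $u\in S^2$, unit vector $\xi\in\mathbb R^3$, and every measurable $\mathrm B:S^2\to\mathbb{SO}(3)$ with $\mathrm B(u)e_3=u$, $$\int_{(0,2\pi)^{n-1}}P_k\big(\mathrm B(u)\mathrm O^*_{j,n}(\mathfrak t_n,\boldsymbol\varphi,\boldsymbol\theta)e_3\cdot\xi\big)\,u_{(0,2\pi)}^{\otimes(n-1)}(d\boldsymbol\theta)=P_k(u\cdot\xi)\,f^{(k)}_{j,n}(\mathfrak t_n,\boldsymbol\varphi),$$ where $f^{(k)}_{1,1}\equiv1$ and, for $n\ge2$, $f^{(k)}_{j,n}(\mathfrak t_n,\boldsymbol\varphi)=f^{(k)}_{j,n_l}(\mathfrak t_n^l,\boldsymbol\varphi^l)P_k(\cos\varphi_{n-1})$ for $j\le n_l$ and $f^{(k)}_{j,n}(\mathfrak t_n,\boldsymbol\varphi)=f^{(k)}_{j-n_l,n_r}(\mathfrak t_n^r,\boldsymbol\varphi^r)P_k(\sin\varphi_{n-1})$ for $j>n_l$.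
   Context: $e_3={}^t(0,0,1)$; $u_{(0,2\pi)}^{\otimes(n-1)}$ is the uniform probability on $(0,2\pi)^{n-1}$ (no integral if $n=1$). Trees: a McKean binary tree is a finite rooted tree in which every node has zero or two children, distinguished as left and right; leaves numbered $1,\dots,n$ left to right; $\mathbb T(n)$ those with $n$ leaves, $\mathfrak t_1$ the one-node tree; for $n\ge2$, $\mathfrak t_n^l,\mathfrak t_n^r$ are the subtrees rooted at the left and right child of the root, with $n_l$ and $n_r=n-n_l$ leaves. For $\boldsymbol\varphi=(\varphi_1,\dots,\varphi_{n-1})$: $\boldsymbol\varphi^l=(\varphi_1,\dots,\varphi_{n_l-1})$, $\boldsymbol\varphi^r=(\varphi_{n_l},\dots,\varphi_{n-2})$ (void if $n_l=1$, resp. $n_r=1$), and $\boldsymbol\theta^l,\boldsymbol\theta^r$ likewise for $\boldsymbol\theta\in(0,2\pi)^{n-1}$. $\mathrm M^l(\varphi,\theta)=\begin{pmatrix}-\cos\theta\cos\varphi&\sin\theta&\cos\theta\sin\varphi\\-\sin\theta\cos\varphi&-\cos\theta&\sin\theta\sin\varphi\\ \sin\varphi&0&\cos\varphi\end{pmatrix}$, $\mathrm M^r(\varphi,\theta)=\begin{pmatrix}\sin\theta&\cos\theta\sin\varphi&-\cos\theta\cos\varphi\\-\cos\theta&\sin\theta\sin\varphi&-\sin\theta\cos\varphi\\0&\cos\varphi&\sin\varphi\end{pmatrix}$. $\mathrm O^*_{1,1}\equiv\mathrm{Id}$ and, for $n\ge2$, $\mathrm O^*_{j,n}(\mathfrak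 t_n,\boldsymbol\varphi,\boldsymbol\theta)=\mathrm M^l(\varphi_{n-1},\theta_{n-1})\mathrm O^*_{j,n_l}(\mathfrak t_n^l,\boldsymbol\varphi^l,\boldsymbol\theta^l)$ for $j\le n_l$ and $=\mathrm M^r(\varphi_{n-1},\theta_{n-1})\mathrm O^*_{j-n_l,n_r}(\mathfrak t_n^r,\boldsymbol\varphi^r,\boldsymbol\theta^r)$ for $j>n_l$. *)

(* Defs.v *)
From Stdlib Require Import Reals Lra Lia ClassicalEpsilon.
Open Scope R_scope.

Record V3 := mkV3 { v1 : R; v2 : R; v3 : R }.
(* a matrix is given by its three rows *)
Record M3 := mkM3 { r1 : V3; r2 : V3; r3 : V3 }.

Definition dot (a b : V3) : R := v1 a * v1 b + v2 a * v2 b + v3 a * v3 b.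
Definition col1 (A : M3) : V3 := mkV3 (v1 (r1 A)) (v1 (r2 A)) (v1 (r3 A)).
Definition col2 (A : M3) : V3 := mkV3 (v2 (r1 A)) (v2 (r2 A)) (v2 (r3 A)).
Definition col3 (A : M3) : V3 := mkV3 (v3 (r1 A)) (v3 (r2 A)) (v3 (r3 A)).
Definition trM (A : M3) : M3 := mkM3 (col1 A) (col2 A) (col3 A).
Definition mv (A : M3) (x : V3) : V3 := mkV3 (dot (r1 A) x) (dot (r2 A) x) (dot (r3 A) x).
Definition mm (A B : M3) : M3 :=
  mkM3 (mkV3 (dot (r1 A) (col1 B)) (dot (r1 A) (col2 B)) (dot (r1 A) (col3 B)))
       (mkV3 (dot (r2 A) (col1 B)) (dot (r2 A) (col2 B)) (dot (r2 A) (col3 B)))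
       (mkV3 (dot (r3 A) (col1 B)) (dot (r3 A) (col2 B)) (dot (r3 A) (col3 B))).
Definition Id3 : M3 := mkM3 (mkV3 1 0 0) (mkV3 0 1 0) (mkV3 0 0 1).
Definition det3 (A : M3) : R :=
  let a := r1 A in let b := r2 A in let c := r3 A in
  v1 a * (v2 b * v3 c - v3 b * v2 c)
  - v2 a * (v1 b * v3 c - v3 b * v1 c)
  + v3 a * (v1 b * v2 c - v2 b * v1 c).
Definition SO3 (A : M3) : Prop := mm (trM A) A = Id3 /\ det3 A = 1.
Definition e3 : V3 := mkV3 0 0 1.
Definition unitv (x : V3) : Prop := dot x x = 1.

(** * Legendre polynomials, via Bonnet's recursion
    P_0 = 1, P_1 = x, (k+2) P_{k+2} = (2k+3) x P_{k+1} - (k+1) P_k. *)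
Fixpoint legendre_pair (k : nat) (x : R) : R * R :=
  match k with
  | O => (1, x)
  | S k' => let (a, b) := legendre_pair k' x in
            (b, ((2 * INR k' + 3) * x * b - (INR k' + 1) * a) / (INR k' + 2))
  end.
Definition legendre (k : nat) (x : R) : R := fst (legendre_pair k x).

Inductive tree : Type := Leaf : tree | Node : tree -> tree -> tree.
Fixpoint leaves (t : tree) : nat :=
  match t with Leaf => 1%nat | Node l r => (leaves l + leaves r)%nat end.

(** Parameter vectors phi = (phi_1,...,phi_{n-1}) are encoded as functions
    nat -> R, using indices 1..n-1 (other values are irrelevant).
    phi^l = (phi_1..phi_{n_l-1}) is phi itself (restricted), and
    phi^r = (phi_{n_l}..phi_{n-2}) is  i |-> phi (n_l - 1 + i). *)
Definition shiftp (nl : nat) (phi : nat -> R) : nat -> R :=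
  fun i => phi (nl - 1 + i)%nat.

Definition Ml (ph th : R) : M3 :=
  mkM3 (mkV3 (- cos th * cos ph) (sin th) (cos th * sin ph))
       (mkV3 (- sin th * cos ph) (- cos th) (sin th * sin ph))
       (mkV3 (sin ph) 0 (cos ph)).
Definition Mr (ph th : R) : M3 :=
  mkM3 (mkV3 (sin th) (cos th * sin ph) (- cos th * cos ph))
       (mkV3 (- cos th) (sin th * sin ph) (- sin th * cos ph))
       (mkV3 0 (cos ph) (sin ph)).

Fixpoint Ostar (t : tree) (j : nat) (phi th : nat -> R) : M3 :=
  match t with
  | Leaf => Id3
  | Node l r =>
      let nl := leaves l in
      let n := leaves t in
      if Nat.leb j nl
      then mm (Ml (phi (n - 1)%nat) (th (n - 1)%nat)) (Ostar l j phi th)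
      else mm (Mr (phi (n - 1)%nat) (th (n - 1)%nat))
              (Ostar r (j - nl) (shiftp nl phi) (shiftp nl th))
  end.

Fixpoint fcoef (k : nat) (t : tree) (j : nat) (phi : nat -> R) : R :=
  match t with
  | Leaf => 1
  | Node l r =>
      let nl := leaves l in
      let n := leaves t in
      if Nat.leb j nl
      then fcoef k l j phi * legendre k (cos (phi (n - 1)%nat))
      else fcoef k r (j - nl) (shiftp nl phi) * legendre k (sin (phi (n - 1)%nat))
  end.

(* Total Riemann integral: the value of RiemannInt if f is Riemann integrable
   on [a,b], and 0 otherwise. *)
Definition Rint (f : R -> R) (a b : R) : R :=
  match excluded_middle_informative
          (exists l, exists pr : Riemann_integrable f a b, RiemannInt pr = l) with
  | left H => proj1_sig (constructive_indefinite_description _ H)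
  | right _ => 0
  end.

Definition upd (th : nat -> R) (m : nat) (t : R) : nat -> R :=
  fun i => if Nat.eqb i m then t else th i.

(* avg_iter m F = integral of F(theta_1,...,theta_m) against the uniform
   probability on (0,2pi)^m, as an iterated (Riemann) integral. *)
Fixpoint avg_iter (m : nat) (F : (nat -> R) -> R) : R :=
  match m with
  | O => F (fun _ => 0)
  | S m' => avg_iter m'
      (fun th => / (2 * PI) * Rint (fun t => F (upd th m t)) 0 (2 * PI))
  end.

(* Main.v *)
Require Import Defs.
From Stdlib Require Import Reals Lra Lia Factorial ClassicalEpsilon FunctionalExtensionality.
From Coquelicot Require Import Coquelicot.
Open Scope R_scope.

Lemma lp_eq k x : legendre_pair k x = (legendre k x, legendre (S k) x).
Proof.
  induction k as [|k IH]; [reflexivity|].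
  unfold legendre at 1 2. simpl legendre_pair at 1 2. rewrite IH. simpl.
  unfold legendre. simpl. rewrite IH. reflexivity.
Qed.

Lemma leg0 x : legendre 0 x = 1. Proof. reflexivity. Qed.
Lemma leg1 x : legendre 1 x = x. Proof. reflexivity. Qed.

Lemma bonnet k x : legendre (S (S k)) x =
  ((2 * INR k + 3) * x * legendre (S k) x - (INR k + 1) * legendre k x) / (INR k + 2).
Proof.
  unfold legendre at 1. simpl legendre_pair. rewrite lp_eq. simpl. reflexivity.
Qed.

Lemma bonnet' k x : (INR k + 2) * legendre (S (S k)) x =
  (2 * INR k + 3) * x * legendre (S k) x - (INR k + 1) * legendre k x.
Proof.
  rewrite bonnet. field. pose proof (pos_INR k). lra.
Qed.

Ltac lc1 c H :=
  match type of H with ?a = ?b =>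
    apply Rminus_diag_uniq; transitivity (c * (a - b));
    [ | rewrite (Rminus_diag_eq _ _ H); ring ] end.
Ltac lc2 c1 H1 c2 H2 :=
  match type of H1 with ?a1 = ?b1 =>
  match type of H2 with ?a2 = ?b2 =>
    apply Rminus_diag_uniq; transitivity (c1 * (a1 - b1) + c2 * (a2 - b2));
    [ | rewrite (Rminus_diag_eq _ _ H1), (Rminus_diag_eq _ _ H2); ring ] end end.

Fixpoint Q (k m : nat) (x : R) : R :=
 match k with
 | O => match m with O => 1 | S _ => 0 end
 | S k' => match m with
           | O => legendre k x
           | S m' => x * Q k' m x + INR (k' + m) * Q k' m' x end
 end.

Lemma Q0 k x : Q k 0 x = legendre k x.
Proof. destruct k; reflexivity. Qed.

Lemma QS k m x : Q (S k) (S m) x = x * Q k (S m) x + (INR k + INR m + 1) * Q k m x.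
Proof. simpl Q at 1. rewrite plus_INR, S_INR. ring. Qed.

Lemma Qz k m x : (k < m)%nat -> Q k m x = 0.
Proof.
  revert m. induction k as [|k IH]; intros m H.
  - destruct m; [lia|reflexivity].
  - destruct m as [|m]; [lia|]. rewrite QS, IH, IH by lia. ring.
Qed.

Lemma INRk2 k : INR k + 2 <> 0.
Proof. pose proof (pos_INR k). lra. Qed.

Lemma Qb0 k x : (1 - x*x) * Q k 1 x = (INR k + 1) * (x * legendre k x - legendre (S k) x).
Proof.
  induction k as [|k IH].
  - simpl Q; rewrite leg0, leg1; simpl INR; ring.
  - rewrite QS, Q0, bonnet, S_INR. simpl INR.
    lc1 x IH. field. apply INRk2.
Qed.

Lemma Qb k m x : (1 - x*x) * Q k (S (S m)) x =
  2 * (INR m + 1) * x * Q k (S m) x + ((INR m + 1) * INR m - INR k * (INR k + 1)) * Q k m x.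
Proof.
  revert m. induction k as [|k IH]; intros m.
  - destruct m; simpl; ring.
  - destruct m as [|m].
    + rewrite !QS, !Q0, !S_INR. simpl INR.
      pose proof (IH 0%nat) as H1. pose proof (Qb0 k x) as H2. simpl INR in H1.
      rewrite Q0 in H1.
      lc2 x H1 (INR k + 0 + 1 + 1) H2. ring.
    + rewrite !QS, !S_INR.
      pose proof (IH (S m)) as H1. pose proof (IH m) as H2. rewrite S_INR in H1.
      lc2 x H1 (INR k + (INR m + 1) + 1 + 1) H2. ring.
Qed.

Lemma Qa2 k m x : Q k (S m) x = x * Q (S k) (S m) x - (INR k - INR m + 1) * Q (S k) m x.
Proof.
  destruct m as [|m].
  - rewrite QS, !Q0. pose proof (Qb0 k x) as H. simpl INR.
    lc1 1 H. ring.
  - rewrite !QS, !S_INR. pose proof (Qb k m x) as H.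
    lc1 1 H. ring.
Qed.

Definition cc (k m : nat) : R := INR (fact (k - m)) / INR (fact (k + m)).
Definition A (k m : nat) (p q : R) : R := cc k m * Q k m p * Q k m q.

Lemma fact_pos' n : 0 < INR (fact n).
Proof. apply lt_0_INR. apply lt_O_fact. Qed.

Lemma I0 K p q : (INR K + 2) * A (S (S K)) 0 p q =
  (2 * INR K + 3) * (p * q * A (S K) 0 p q + (1 - p*p) * (1 - q*q) * A (S K) 1 p q)
  - (INR K + 1) * A K 0 p q.
Proof.
  unfold A, cc. rewrite !Q0, !Nat.sub_0_r, !Nat.add_0_r.
  replace (S K - 1)%nat with K by lia. replace (S K + 1)%nat with (S (S K)) by lia.
  pose proof (Qb0 (S K) p) as Hp. pose proof (Qb0 (S K) q) as Hq.
  transitivity ((INR K + 2) * (legendre (S (S K)) p * legendre (S (S K)) q)).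
  { field; repeat split; apply Rgt_not_eq, fact_pos'. }
  symmetry.
  transitivity ((2 * INR K + 3) * (p * q * (legendre (S K) p * legendre (S K) q) +
     INR (fact K) / INR (fact (S (S K))) * ((1 - p * p) * Q (S K) 1 p) * ((1 - q * q) * Q (S K) 1 q)) -
     (INR K + 1) * (legendre K p * legendre K q)).
  { field; repeat split; apply Rgt_not_eq, fact_pos'. }
  rewrite Hp, Hq, !bonnet. rewrite !fact_simpl, !mult_INR, !S_INR.
  field. pose proof (pos_INR K). pose proof (fact_pos' K). repeat split; lra.
Qed.

Lemma Az k m p q : (k < m)%nat -> A k m p q = 0.
Proof. intro H. unfold A. rewrite (Qz k m p H). ring. Qed.

Ltac fnz := repeat split; try (apply Rgt_not_eq, fact_pos'); try (apply not_0_INR; lia);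
  try (pose proof (pos_INR 0); lra).

Lemma Im_big K m p q : (S K < m)%nat ->
  (INR K + 2) * A (S (S K)) (S m) p q =
  (2 * INR K + 3) * (p * q * A (S K) (S m) p q +
     ((1 - p*p) * (1 - q*q) * A (S K) (S (S m)) p q + A (S K) m p q) / 2)
  - (INR K + 1) * A K (S m) p q.
Proof. intro H. rewrite !Az by lia. field. Qed.

Lemma Im_top K p q :
  (INR K + 2) * A (S (S K)) (S (S K)) p q =
  (2 * INR K + 3) * (p * q * A (S K) (S (S K)) p q +
     ((1 - p*p) * (1 - q*q) * A (S K) (S (S (S K))) p q + A (S K) (S K) p q) / 2)
  - (INR K + 1) * A K (S (S K)) p q.
Proof.
  rewrite (Az (S K) (S (S K))), (Az (S K) (S (S (S K)))), (Az K) by lia.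
  unfold A, cc. rewrite (QS (S K) (S K) p), (QS (S K) (S K) q). rewrite !(Qz (S K) (S (S K))) by lia.
  rewrite !Nat.sub_diag.
  replace (S (S K) + S (S K))%nat with (S (S (S K + S K))) by lia.
  rewrite !fact_simpl, !mult_INR, !S_INR, !plus_INR, !S_INR. simpl fact.
  field. pose proof (pos_INR K). pose proof (lt_O_fact (K + S K)).
  repeat split; try lra. apply not_0_INR. lia.
Qed.

Lemma Qdiag K x : Q (S K) K x = x * Q (S K) (S K) x.
Proof.
  pose proof (Qb (S K) K x) as H. rewrite (Qz (S K) (S (S K))) in H by lia.
  rewrite S_INR in H.
  assert (H2 : 2 * (INR K + 1) * (Q (S K) K x - x * Q (S K) (S K) x) = 0) by lra.
  apply Rmult_integral in H2. destruct H2 as [H2|H2]; [|lra].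
  pose proof (pos_INR K). lra.
Qed.

Lemma Im_diag K p q :
  (INR K + 2) * A (S (S K)) (S K) p q =
  (2 * INR K + 3) * (p * q * A (S K) (S K) p q +
     ((1 - p*p) * (1 - q*q) * A (S K) (S (S K)) p q + A (S K) K p q) / 2)
  - (INR K + 1) * A K (S K) p q.
Proof.
  rewrite (Az (S K) (S (S K))), (Az K) by lia.
  unfold A, cc. rewrite (QS (S K) K p), (QS (S K) K q), !Qdiag.
  rewrite !Nat.sub_diag.
  replace (S (S K) - S K)%nat with 1%nat by lia.
  replace (S K - K)%nat with 1%nat by lia.
  replace (S (S K) + S K)%nat with (S (S (S (K + K)))) by lia.
  replace (S K + S K)%nat with (S (S (K + K))) by lia.
  replace (S K + K)%nat with (S (K + K)) by lia.
  rewrite !fact_simpl, !mult_INR, !S_INR, !plus_INR. simpl fact. simpl INR.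
  field. pose proof (pos_INR K). pose proof (fact_pos' (K + K)).
  repeat split; lra.
Qed.

Lemma Im_gen K m p q : (m < K)%nat ->
  (INR K + 2) * A (S (S K)) (S m) p q =
  (2 * INR K + 3) * (p * q * A (S K) (S m) p q +
     ((1 - p*p) * (1 - q*q) * A (S K) (S (S m)) p q + A (S K) m p q) / 2)
  - (INR K + 1) * A K (S m) p q.
Proof.
  intro H. unfold A.
  set (a := Q (S K) (S (S m)) p). set (b := Q (S K) (S (S m)) q).
  replace ((1-p*p)*(1-q*q)*(cc (S K) (S (S m)) * a * b)) with
    (cc (S K) (S (S m)) * ((1-p*p)*a) * ((1-q*q)*b)) by ring.
  unfold a, b. rewrite (Qb (S K) m p), (Qb (S K) m q).
  rewrite (QS (S K) m p), (QS (S K) m q), (Qa2 K m p), (Qa2 K m q).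
  destruct (Nat.lt_exists_pred 0 (K - m)) as [d [Hd _]]; [lia|].
  assert (HK : K = (m + S d)%nat) by lia. subst K. clear H Hd.
  unfold cc.
  replace (S (S (m + S d)) - S m)%nat with (S (S d)) by lia.
  replace (S (S (m + S d)) + S m)%nat with (S (S (S (S (m + m + d))))) by lia.
  replace (S (m + S d) - S m)%nat with (S d) by lia.
  replace (S (m + S d) + S m)%nat with (S (S (S (m + m + d)))) by lia.
  replace (S (m + S d) - S (S m))%nat with d by lia.
  replace (S (m + S d) + S (S m))%nat with (S (S (S (S (m + m + d))))) by lia.
  replace (S (m + S d) - m)%nat with (S (S d)) by lia.
  replace (S (m + S d) + m)%nat with (S (S (m + m + d))) by lia.
  replace ((m + S d) - S m)%nat with d by lia.
  replace ((m + S d) + S m)%nat with (S (S (m + m + d))) by lia.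
  rewrite !fact_simpl, !mult_INR, !S_INR, !plus_INR, !S_INR.
  set (F := INR (fact d)). set (G := INR (fact (m + m + d))).
  set (u1 := Q (S (m + S d)) m p). set (v1 := Q (S (m + S d)) (S m) p).
  set (u2 := Q (S (m + S d)) m q). set (v2 := Q (S (m + S d)) (S m) q).
  assert (0 < F) by apply fact_pos'. assert (0 < G) by apply fact_pos'.
  pose proof (pos_INR m). pose proof (pos_INR d).
  field. repeat split; lra.
Qed.

Lemma c_mult (f g : R -> R) x : continuous f x -> continuous g x -> continuous (fun y => f y * g y) x.
Proof. intros. apply (continuous_mult f g); auto. Qed.
Lemma c_plus (f g : R -> R) x : continuous f x -> continuous g x -> continuous (fun y => f y + g y) x.
Proof. intros. apply (continuous_plus f g); auto. Qed.
Lemma c_minus (f g : R -> R) x : continuous f x -> continuous g x -> continuous (fun y => f y - g y) x.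
Proof. intros. apply (continuous_minus f g); auto. Qed.
Lemma c_const (c : R) x : continuous (fun _ : R => c) x.
Proof. apply continuous_const. Qed.
Lemma c_id x : continuous (fun y : R => y) x.
Proof. apply continuous_id. Qed.
Lemma c_cos (f : R -> R) x : continuous f x -> continuous (fun y => cos (f y)) x.
Proof. intros. apply continuous_cos_comp; auto. Qed.
Lemma c_sin (f : R -> R) x : continuous f x -> continuous (fun y => sin (f y)) x.
Proof. intros. apply (continuous_comp f sin); auto. apply continuous_sin. Qed.
Lemma c_comp (f g : R -> R) x : continuous f x -> (forall y, continuous g y) -> continuous (fun y => g (f y)) x.
Proof. intros. apply (continuous_comp f g); auto. Qed.

Lemma c_opp (f : R -> R) x : continuous f x -> continuous (fun y => - f y) x.
Proof. intros. apply (continuous_opp f); auto. Qed.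
Lemma c_inv (f : R -> R) x : continuous f x -> continuous (fun y => - f y) x.
Proof. intros. apply (continuous_opp f); auto. Qed.

Ltac cont := repeat match goal with
 | |- continuous (fun _ => ?c) _ => apply (c_const c)
 | |- continuous (fun y => y) _ => apply c_id
 | |- continuous (fun y => cos (@?a y)) _ => apply (c_cos a)
 | |- continuous (fun y => sin (@?a y)) _ => apply (c_sin a)
 | |- continuous (fun y => @?a y - @?b y) _ => apply (c_minus a b)
 | |- continuous (fun y => @?a y + @?b y) _ => apply (c_plus a b)
 | |- continuous (fun y => - @?a y) _ => apply (c_opp a)
 | |- continuous (fun y => @?a y * @?b y) _ => apply (c_mult a b)
 end.

Lemma leg_cont k x : continuous (legendre k) x /\ continuous (legendre (S k)) x.
Proof.
  revert x. induction k as [|k IH]; intro x.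
  - split.
    + apply (continuous_ext (fun _ => 1)). { intro; reflexivity. } apply c_const.
    + apply (continuous_ext (fun y => y)). { intro; reflexivity. } apply c_id.
  - split; [apply IH|].
    apply (continuous_ext (fun y => ((2 * INR k + 3) * y * legendre (S k) y - (INR k + 1) * legendre k y) * / (INR k + 2))).
    { intro y. rewrite bonnet. reflexivity. }
    destruct (IH x). cont; auto.
Qed.

Lemma legc k x : continuous (legendre k) x.
Proof. apply leg_cont. Qed.

Lemma Rint_RInt f a b : ex_RInt f a b -> Rint f a b = RInt f a b.
Proof.
  intro H. pose proof (ex_RInt_Reals_0 _ _ _ H) as pr.
  unfold Rint. destruct excluded_middle_informative as [e|n].
  - destruct constructive_indefinite_description as [l [pr' E]]. simpl.
    rewrite <- E. rewrite (RInt_Reals f a b pr'). reflexivity.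
  - exfalso. apply n. exists (RiemannInt pr), pr. reflexivity.
Qed.

Lemma Rint_const c : Rint (fun _ => c) 0 (2*PI) = 2 * PI * c.
Proof.
  rewrite Rint_RInt by apply ex_RInt_const. rewrite RInt_const.
  unfold scal; simpl; unfold mult; simpl. ring.
Qed.

Lemma plus_R (x y : R) : plus x y = x + y. Proof. reflexivity. Qed.
Lemma scal_R (x y : R) : scal x y = x * y. Proof. reflexivity. Qed.
Lemma minus_R (x y : R) : minus x y = x - y. Proof. reflexivity. Qed.
Ltac toR := match goal with |- ?a = ?b => change (@eq R a b) end; cbv beta; rewrite ?plus_R, ?scal_R, ?minus_R.

Lemma RInt_lin2 (f g : R -> R) a b c d : ex_RInt f a b -> ex_RInt g a b ->
  RInt (fun x => c * f x + d * g x) a b = c * RInt f a b + d * RInt g a b.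
Proof.
  intros Hf Hg.
  pose proof (is_RInt_plus _ _ a b _ _ (is_RInt_scal _ a b c _ (RInt_correct f a b Hf)) (is_RInt_scal _ a b d _ (RInt_correct g a b Hg))) as H.
  apply is_RInt_unique in H. exact H.
Qed.

Lemma ex_lin2 (f g : R -> R) a b c d : ex_RInt f a b -> ex_RInt g a b ->
  ex_RInt (fun x => c * f x + d * g x) a b.
Proof.
  intros Hf Hg.
  exists (plus (scal c (RInt f a b)) (scal d (RInt g a b))).
  exact (is_RInt_plus _ _ a b _ _ (is_RInt_scal _ a b c _ (RInt_correct f a b Hf)) (is_RInt_scal _ a b d _ (RInt_correct g a b Hg))).
Qed.

Lemma ex_cont (f : R -> R) a b : (forall t, continuous f t) -> ex_RInt f a b.
Proof. intro H. apply (ex_RInt_continuous (V := R_CompleteNormedModule)). intros; apply H. Qed.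

Lemma RInt_scal1 (f : R -> R) a b c : ex_RInt f a b ->
  RInt (fun x => c * f x) a b = c * RInt f a b.
Proof.
  intros Hf. pose proof (is_RInt_scal _ a b c _ (RInt_correct f a b Hf)) as H.
  apply is_RInt_unique in H. exact H.
Qed.


Definition xx (p q r t0 t : R) := p * q + r * cos (t - t0).
Definition Mo (h : R -> R) (p q r t0 : R) (m : nat) : R :=
  RInt (fun t => h (xx p q r t0 t) * cos (INR m * (t - t0))) 0 (2 * PI).

Lemma cont_mo (h : R -> R) p q r t0 m : (forall y, continuous h y) ->
  forall t, continuous (fun t => h (xx p q r t0 t) * cos (INR m * (t - t0))) t.
Proof.
  intros Hh t. apply c_mult.
  - apply (c_comp (fun t => xx p q r t0 t) h); auto. unfold xx. cont.
  - cont.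
Qed.

Lemma ex_mo (h : R -> R) p q r t0 m : (forall y, continuous h y) ->
  ex_RInt (fun t => h (xx p q r t0 t) * cos (INR m * (t - t0))) 0 (2 * PI).
Proof. intros. apply (ex_RInt_continuous (V := R_CompleteNormedModule)). intros; apply cont_mo; auto. Qed.

Lemma Mo_ext h1 h2 p q r t0 m : (forall y, h1 y = h2 y) -> Mo h1 p q r t0 m = Mo h2 p q r t0 m.
Proof. intro H. unfold Mo. apply RInt_ext. intros. rewrite H. reflexivity. Qed.

Lemma Mo_lin (f g : R -> R) a b p q r t0 m : (forall y, continuous f y) -> (forall y, continuous g y) ->
  Mo (fun y => a * f y + b * g y) p q r t0 m = a * Mo f p q r t0 m + b * Mo g p q r t0 m.
Proof.
  intros Hf Hg. unfold Mo.
  rewrite <- RInt_lin2 by (apply ex_mo; auto).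
  apply RInt_ext. intros. toR. ring.
Qed.

Lemma cos_int m t0 : RInt (fun t => cos (INR m * (t - t0))) 0 (2 * PI) =
  match m with O => 2 * PI | S _ => 0 end.
Proof.
  destruct m as [|m].
  - rewrite (RInt_ext _ (fun _ => 1)). rewrite RInt_const. toR. ring.
    intros. simpl INR. rewrite Rmult_0_l, cos_0. reflexivity.
  - assert (Hm : INR (S m) <> 0) by (apply not_0_INR; lia).
    set (F := fun t => sin (INR (S m) * (t - t0)) / INR (S m)).
    assert (H1 : forall x, Rmin 0 (2*PI) <= x <= Rmax 0 (2*PI) -> is_derive F x (cos (INR (S m) * (x - t0)))).
    { intros x _. unfold F. generalize (INR (S m)) Hm. intros c Hc.
      auto_derive; [auto|]. toR. unfold Rminus. field. auto. }
    assert (H2 : forall x, Rmin 0 (2*PI) <= x <= Rmax 0 (2*PI) -> continuous (fun t => cos (INR (S m) * (t - t0))) x).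
    { intros x _. cont. }
    pose proof (is_RInt_derive F _ 0 (2*PI) H1 H2) as H. apply is_RInt_unique in H.
    rewrite H. toR. unfold F.
    replace (INR (S m) * (2 * PI - t0)) with (INR (S m) * (0 - t0) + 2 * INR (S m) * PI) by ring.
    rewrite sin_period. field. auto.
Qed.

Lemma Mo_x (h : R -> R) p q r t0 m : (forall y, continuous h y) ->
  Mo (fun y => y * h y) p q r t0 (S m) =
  p * q * Mo h p q r t0 (S m) + r / 2 * (Mo h p q r t0 (S (S m)) + Mo h p q r t0 m).
Proof.
  intro Hh.
  set (H1 := fun t => h (xx p q r t0 t) * cos (INR (S m) * (t - t0))).
  set (H2 := fun t => h (xx p q r t0 t) * cos (INR (S (S m)) * (t - t0))).
  set (H0 := fun t => h (xx p q r t0 t) * cos (INR m * (t - t0))).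
  set (G := fun t => 1 * H2 t + 1 * H0 t).
  assert (E1 : ex_RInt H1 0 (2*PI)) by (apply ex_mo; auto).
  assert (E2 : ex_RInt H2 0 (2*PI)) by (apply ex_mo; auto).
  assert (E0 : ex_RInt H0 0 (2*PI)) by (apply ex_mo; auto).
  assert (EG : ex_RInt G 0 (2*PI)) by (apply ex_lin2; auto).
  pose proof (RInt_lin2 H1 G 0 (2*PI) (p*q) (r/2) E1 EG) as L1.
  pose proof (RInt_lin2 H2 H0 0 (2*PI) 1 1 E2 E0) as L2.
  change (RInt G 0 (2*PI) = 1 * RInt H2 0 (2*PI) + 1 * RInt H0 0 (2*PI)) in L2.
  change (Mo h p q r t0 (S m)) with (RInt H1 0 (2*PI)).
  change (Mo h p q r t0 (S (S m))) with (RInt H2 0 (2*PI)).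
  change (Mo h p q r t0 m) with (RInt H0 0 (2*PI)).
  replace (RInt H2 0 (2 * PI) + RInt H0 0 (2 * PI)) with (RInt G 0 (2*PI)) by (rewrite L2; toR; ring).
  rewrite <- L1. unfold Mo. apply RInt_ext. intros t _. toR. unfold H1, G, H2, H0, xx.
  rewrite !S_INR. remember (t - t0) as u.
  replace ((INR m + 1 + 1) * u) with ((INR m + 1) * u + u) by ring.
  replace (INR m * u) with ((INR m + 1) * u - u) by ring.
  rewrite (cos_plus ((INR m + 1) * u) u), (cos_minus ((INR m + 1) * u) u). field.
Qed.

Lemma Mo_x0 (h : R -> R) p q r t0 : (forall y, continuous h y) ->
  Mo (fun y => y * h y) p q r t0 0 =
  p * q * Mo h p q r t0 0 + r * Mo h p q r t0 1.
Proof.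
  intro Hh.
  set (H1 := fun t => h (xx p q r t0 t) * cos (INR 0 * (t - t0))).
  set (H2 := fun t => h (xx p q r t0 t) * cos (INR 1 * (t - t0))).
  assert (E1 : ex_RInt H1 0 (2*PI)) by (apply ex_mo; auto).
  assert (E2 : ex_RInt H2 0 (2*PI)) by (apply ex_mo; auto).
  pose proof (RInt_lin2 H1 H2 0 (2*PI) (p*q) r E1 E2) as L1.
  change (Mo h p q r t0 0) with (RInt H1 0 (2*PI)).
  change (Mo h p q r t0 1) with (RInt H2 0 (2*PI)).
  rewrite <- L1. unfold Mo. apply RInt_ext. intros t _. toR. unfold H1, H2, xx. simpl INR.
  rewrite Rmult_0_l, Rmult_1_l, cos_0. ring.
Qed.

Lemma Im_all K m p q :
  (INR K + 2) * A (S (S K)) (S m) p q =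
  (2 * INR K + 3) * (p * q * A (S K) (S m) p q +
     ((1 - p*p) * (1 - q*q) * A (S K) (S (S m)) p q + A (S K) m p q) / 2)
  - (INR K + 1) * A K (S m) p q.
Proof.
  destruct (Nat.lt_trichotomy m K) as [H|[H|H]].
  - apply Im_gen; auto.
  - subst. apply Im_diag.
  - destruct (Nat.eq_dec m (S K)) as [E|E].
    + subst. apply Im_top.
    + apply Im_big. lia.
Qed.

Lemma A0 m p q : A 0 m p q = match m with O => 1 | S _ => 0 end.
Proof. destruct m; unfold A, cc; simpl; field. apply not_0_INR; pose proof (lt_O_fact m); lia. Qed.

Lemma A1_0 p q : A 1 0 p q = p * q.
Proof. unfold A, cc. simpl. rewrite !leg1. field. Qed.

Lemma A1_S m p q : A 1 (S m) p q =
  p * q * A 0 (S m) p q + ((1 - p*p) * (1 - q*q) * A 0 (S (S m)) p q + A 0 m p q) / 2.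
Proof.
  rewrite !A0. destruct m as [|m].
  - unfold A, cc. simpl. field.
  - rewrite Az by lia. field.
Qed.

Lemma Ak0 k p q : A k 0 p q = legendre k p * legendre k q.
Proof. unfold A, cc. rewrite !Q0, Nat.sub_0_r, Nat.add_0_r. field. apply Rgt_not_eq, fact_pos'. Qed.

Lemma contL k : forall y, continuous (legendre k) y.
Proof. intro; apply legc. Qed.
Lemma contxL k : forall y, continuous (fun y => y * legendre k y) y.
Proof. intro y. apply (c_mult (fun y => y) (legendre k)); [apply c_id | apply legc]. Qed.

Lemma modes p q r t0 : r * r = (1 - p*p) * (1 - q*q) ->
  forall k m, Mo (legendre k) p q r t0 m = 2 * PI * r ^ m * A k m p q.
Proof.
  intros Hr k.
  assert (base0 : forall m, Mo (legendre 0) p q r t0 m = 2 * PI * r ^ m * A 0 m p q).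
  { intro m. unfold Mo. rewrite (RInt_ext _ (fun t => cos (INR m * (t - t0)))).
    - rewrite cos_int, A0. destruct m; simpl; ring.
    - intros. toR. rewrite leg0. ring. }
  enough (H : (forall m, Mo (legendre k) p q r t0 m = 2 * PI * r ^ m * A k m p q) /\
              (forall m, Mo (legendre (S k)) p q r t0 m = 2 * PI * r ^ m * A (S k) m p q))
    by apply H.
  induction k as [|k [IH1 IH2]].
  - split; [exact base0|].
    intro m. rewrite (Mo_ext _ (fun y => y * legendre 0 y)) by (intro; rewrite leg0, leg1; ring).
    destruct m as [|m].
    + rewrite Mo_x0 by apply contL. rewrite !base0, A1_0, !A0. simpl. ring.
    + rewrite Mo_x by apply contL. rewrite !base0, A1_S. simpl pow.
      replace (r * (r * r ^ m)) with (r ^ m * (r * r)) by ring. rewrite Hr. field.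
  - split; [exact IH2|].
    intro m.
    rewrite (Mo_ext _ (fun y => ((2 * INR k + 3) / (INR k + 2)) * (y * legendre (S k) y)
                              + (- (INR k + 1) / (INR k + 2)) * legendre k y)).
    2: { intro y. rewrite bonnet. field. apply INRk2. }
    rewrite Mo_lin by (apply contxL || apply contL).
    destruct m as [|m].
    + rewrite Mo_x0 by apply contL. rewrite !IH1, !IH2.
      pose proof (I0 k p q) as HI. rewrite <- Hr in HI.
      apply (Rmult_eq_reg_l (INR k + 2)); [|apply INRk2].
      transitivity (2 * PI * ((2 * INR k + 3) * (p * q * A (S k) 0 p q + r * r * A (S k) 1 p q) -
        (INR k + 1) * A k 0 p q)).
      { simpl pow. field. apply INRk2. }
      rewrite <- HI. simpl pow. ring.
    + rewrite Mo_x by apply contL. rewrite !IH1, !IH2.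
      pose proof (Im_all k m p q) as HI. rewrite <- Hr in HI.
      apply (Rmult_eq_reg_l (INR k + 2)); [|apply INRk2].
      transitivity (2 * PI * r ^ (S m) * ((2 * INR k + 3) * (p * q * A (S k) (S m) p q +
         (r * r * A (S k) (S (S m)) p q + A (S k) m p q) / 2) - (INR k + 1) * A k (S m) p q)).
      { simpl pow. field. apply INRk2. }
      rewrite <- HI. ring.
Qed.

Lemma polar a b : exists r t0, a = r * cos t0 /\ b = r * sin t0 /\ r * r = a * a + b * b.
Proof.
  set (r := sqrt (a * a + b * b)).
  assert (Hr2 : r * r = a * a + b * b) by (apply sqrt_sqrt; nra).
  assert (Hr0 : 0 <= r) by apply sqrt_pos.
  destruct (Req_dec r 0) as [Z|NZ].
  - exists 0, 0. rewrite Z in Hr2. split; [|split]; nra.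
  - assert (Hp : 0 < r) by lra.
    assert (Ha : -1 <= a / r <= 1).
    { split.
      - apply (Rmult_le_reg_r r); auto. field_simplify; [|lra]. nra.
      - apply (Rmult_le_reg_r r); auto. field_simplify; [|lra]. nra. }
    assert (Hs : sqrt (1 - (a / r)²) = Rabs b / r).
    { replace (1 - (a / r)²) with ((b / r)²).
      - rewrite sqrt_Rsqr_abs. rewrite Rabs_div by lra. rewrite (Rabs_right r) by lra. reflexivity.
      - unfold Rsqr. field_simplify_eq; try lra; nra. }
    destruct (Rle_dec 0 b) as [Hb|Hb].
    + exists r, (acos (a / r)). rewrite cos_acos, sin_acos, Hs by auto.
      rewrite Rabs_right by lra. split; [|split]; [field|field|]; lra.
    + exists r, (- acos (a / r)). rewrite cos_neg, sin_neg, cos_acos, sin_acos, Hs by auto.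
      rewrite Rabs_left by lra. split; [|split]; [field|field|]; lra.
Qed.

Lemma cont_legc k (f : R -> R) x : continuous f x -> continuous (fun y => legendre k (f y)) x.
Proof. intro H. apply (c_comp f (legendre k)); auto. apply contL. Qed.

Lemma addition k p q a b c : a * a + b * b = (1 - p*p) * (1 - q*q) ->
  / (2 * PI) * Rint (fun t => c * legendre k (p * q + a * cos t + b * sin t)) 0 (2 * PI)
  = c * legendre k p * legendre k q.
Proof.
  intro Hab. destruct (polar a b) as [r [t0 [Ha [Hb Hr]]]].
  rewrite Hab in Hr.
  pose proof (modes p q r t0 Hr k 0) as HM. rewrite Ak0 in HM. simpl pow in HM.
  rewrite Rint_RInt.
  2: { apply ex_cont. intro t. apply (c_mult (fun _ => c)); [apply c_const|].
       apply cont_legc. cont. }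
  rewrite (RInt_ext _ (fun t => c * (legendre k (xx p q r t0 t) * cos (INR 0 * (t - t0))))).
  2: { intros t _. toR. unfold xx. simpl INR. rewrite Rmult_0_l, cos_0, cos_minus.
       rewrite Ha, Hb. f_equal. rewrite Rmult_1_r. f_equal. ring. }
  rewrite RInt_scal1 by (apply ex_mo; apply contL).
  change (RInt (fun t => legendre k (xx p q r t0 t) * cos (INR 0 * (t - t0))) 0 (2 * PI))
    with (Mo (legendre k) p q r t0 0).
  rewrite HM. field. pose proof PI_RGT_0. lra.
Qed.

Lemma mv_mm A B x : mv (mm A B) x = mv A (mv B x).
Proof.
  destruct A as [[a1 a2 a3] [a4 a5 a6] [a7 a8 a9]].
  destruct B as [[b1 b2 b3] [b4 b5 b6] [b7 b8 b9]]. destruct x as [x1 x2 x3].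
  unfold mv, mm, dot, col1, col2, col3; simpl. f_equal; ring.
Qed.

Lemma mv_Id x : mv Id3 x = x.
Proof. destruct x. unfold mv, Id3, dot; simpl. f_equal; ring. Qed.

Definition Rz t v := mkV3 (cos t * v1 v - sin t * v2 v) (sin t * v1 v + cos t * v2 v) (v3 v).
Definition Nl ph w := mkV3 (- cos ph * v1 w + sin ph * v3 w) (- v2 w) (sin ph * v1 w + cos ph * v3 w).
Definition Nr ph w := mkV3 (sin ph * v2 w - cos ph * v3 w) (- v1 w) (cos ph * v2 w + sin ph * v3 w).

Lemma Ml_dec ph t w : mv (Ml ph t) w = Rz t (Nl ph w).
Proof. destruct w. unfold mv, Ml, Rz, Nl, dot; simpl. f_equal; ring. Qed.
Lemma Mr_dec ph t w : mv (Mr ph t) w = Rz t (Nr ph w).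
Proof. destruct w. unfold mv, Mr, Rz, Nr, dot; simpl. f_equal; ring. Qed.

Lemma sc t : sin t * sin t + cos t * cos t = 1.
Proof. pose proof (sin2_cos2 t). unfold Rsqr in H. lra. Qed.

Lemma Rz_norm t v : dot (Rz t v) (Rz t v) = dot v v.
Proof.
  destruct v as [x y z]. unfold Rz, dot; simpl.
  transitivity ((sin t * sin t + cos t * cos t) * (x * x + y * y) + z * z); [ring|].
  rewrite sc. ring.
Qed.
Lemma Nl_norm ph w : dot (Nl ph w) (Nl ph w) = dot w w.
Proof.
  destruct w as [x y z]. unfold Nl, dot; simpl.
  transitivity ((sin ph * sin ph + cos ph * cos ph) * (x * x + z * z) + y * y); [ring|].
  rewrite sc. ring.
Qed.
Lemma Nr_norm ph w : dot (Nr ph w) (Nr ph w) = dot w w.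
Proof.
  destruct w as [x y z]. unfold Nr, dot; simpl.
  transitivity ((sin ph * sin ph + cos ph * cos ph) * (y * y + z * z) + x * x); [ring|].
  rewrite sc. ring.
Qed.

Lemma leaves_pos t : (1 <= leaves t)%nat.
Proof. induction t; simpl; lia. Qed.

Lemma Ostar_node l r j phi th : Ostar (Node l r) j phi th =
  if Nat.leb j (leaves l)
  then mm (Ml (phi (leaves l + leaves r - 1)%nat) (th (leaves l + leaves r - 1)%nat)) (Ostar l j phi th)
  else mm (Mr (phi (leaves l + leaves r - 1)%nat) (th (leaves l + leaves r - 1)%nat))
          (Ostar r (j - leaves l) (shiftp (leaves l) phi) (shiftp (leaves l) th)).
Proof. reflexivity. Qed.

Lemma fcoef_node k l r j phi : fcoef k (Node l r) j phi =
  if Nat.leb j (leaves l)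
  then fcoef k l j phi * legendre k (cos (phi (leaves l + leaves r - 1)%nat))
  else fcoef k r (j - leaves l) (shiftp (leaves l) phi) * legendre k (sin (phi (leaves l + leaves r - 1)%nat)).
Proof. reflexivity. Qed.

Lemma Ostar_norm t : forall j phi th x,
  dot (mv (Ostar t j phi th) x) (mv (Ostar t j phi th) x) = dot x x.
Proof.
  induction t as [|l IHl r IHr]; intros j phi th x.
  - simpl. rewrite mv_Id. reflexivity.
  - rewrite Ostar_node. destruct (Nat.leb j (leaves l)); rewrite mv_mm.
    + rewrite Ml_dec, Rz_norm, Nl_norm. apply IHl.
    + rewrite Mr_dec, Rz_norm, Nr_norm. apply IHr.
Qed.

Lemma shift_upd nl th i x : (nl - 1 <= i)%nat ->
  shiftp nl (upd th i x) = upd (shiftp nl th) (i - (nl - 1)) x.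
Proof.
  intro H. apply functional_extensionality. intro p. unfold shiftp, upd.
  destruct (Nat.eqb (nl - 1 + p) i) eqn:E1; destruct (Nat.eqb p (i - (nl - 1))) eqn:E2; auto.
  - apply Nat.eqb_eq in E1. apply Nat.eqb_neq in E2. lia.
  - apply Nat.eqb_neq in E1. apply Nat.eqb_eq in E2. lia.
Qed.

Lemma Ostar_upd t : forall j phi th i x, (leaves t <= i)%nat ->
  Ostar t j phi (upd th i x) = Ostar t j phi th.
Proof.
  induction t as [|l IHl r IHr]; intros j phi th i x H.
  - reflexivity.
  - simpl leaves in H. pose proof (leaves_pos l). pose proof (leaves_pos r).
    rewrite !Ostar_node.
    assert (E : upd th i x (leaves l + leaves r - 1)%nat = th (leaves l + leaves r - 1)%nat).
    { unfold upd. destruct (Nat.eqb _ i) eqn:E; auto. apply Nat.eqb_eq in E. lia. }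
    rewrite E. destruct (Nat.leb j (leaves l)).
    + rewrite IHl by lia. reflexivity.
    + rewrite shift_upd by lia. rewrite IHr by lia. reflexivity.
Qed.

Fixpoint avgf (a m : nat) (F : (nat -> R) -> R) (th : nat -> R) : R :=
  match m with
  | O => F th
  | S m' => avgf a m' (fun th' => / (2 * PI) * Rint (fun t => F (upd th' (a + S m') t)) 0 (2 * PI)) th
  end.

Lemma avg_iter_avgf m : forall F, avg_iter m F = avgf 0 m F (fun _ => 0).
Proof. induction m as [|m IH]; intro F; [reflexivity|]. simpl. apply IH. Qed.

Lemma avgf_split a m1 m2 : forall F th,
  avgf a (m1 + m2) F th = avgf a m1 (avgf (a + m1) m2 F) th.
Proof.
  induction m2 as [|m2 IH]; intros F th.
  - rewrite Nat.add_0_r. reflexivity.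
  - rewrite Nat.add_succ_r. simpl avgf at 1. rewrite IH. simpl avgf at 2.
    replace (a + S (m1 + m2))%nat with (a + m1 + S m2)%nat by lia. reflexivity.
Qed.

Lemma PI2_neq : 2 * PI <> 0.
Proof. pose proof PI_RGT_0. lra. Qed.

Lemma avgf_const a m : forall G th,
  (forall th' i x, (a < i)%nat -> G (upd th' i x) = G th') -> avgf a m G th = G th.
Proof.
  induction m as [|m IH]; intros G th HG; [reflexivity|].
  simpl avgf.
  replace (fun th' => / (2 * PI) * Rint (fun t => G (upd th' (a + S m) t)) 0 (2 * PI)) with G.
  - apply IH. auto.
  - apply functional_extensionality. intro th'.
    replace (fun t => G (upd th' (a + S m) t)) with (fun _ : R => G th').
    + rewrite Rint_const. field. pose proof PI_RGT_0. lra.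
    + apply functional_extensionality. intro t. rewrite HG by lia. reflexivity.
Qed.

Definition sh (a : nat) (th : nat -> R) : nat -> R := fun i => th (a + i)%nat.

Lemma sh_upd a th m t : sh a (upd th (a + m) t) = upd (sh a th) m t.
Proof.
  apply functional_extensionality. intro i. unfold sh, upd.
  destruct (Nat.eqb (a + i) (a + m)) eqn:E1; destruct (Nat.eqb i m) eqn:E2; auto.
  - apply Nat.eqb_eq in E1. apply Nat.eqb_neq in E2. lia.
  - apply Nat.eqb_neq in E1. apply Nat.eqb_eq in E2. lia.
Qed.

Lemma avgf_shift a m : forall H th,
  avgf a m (fun th' => H (sh a th')) th = avgf 0 m H (sh a th).
Proof.
  induction m as [|m IH]; intros H th; [reflexivity|].
  simpl avgf.
  replace (fun th' => / (2 * PI) * Rint (fun t => H (sh a (upd th' (a + S m) t))) 0 (2 * PI))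
    with (fun th' => (fun s => / (2 * PI) * Rint (fun t => H (upd s (S m) t)) 0 (2 * PI)) (sh a th')).
  - apply (IH (fun s => / (2 * PI) * Rint (fun t => H (upd s (S m) t)) 0 (2 * PI))).
  - apply functional_extensionality. intro th'. simpl.
    replace (fun t => H (sh a (upd th' (a + S m) t))) with (fun t => H (upd (sh a th') (S m) t)).
    + reflexivity.
    + apply functional_extensionality. intro t. rewrite sh_upd. reflexivity.
Qed.

Lemma root_int k c v eta : dot v v = 1 -> dot eta eta = 1 ->
  / (2 * PI) * Rint (fun t => c * legendre k (dot (Rz t v) eta)) 0 (2 * PI)
  = c * legendre k (v3 v) * legendre k (v3 eta).
Proof.
  intros Hv He. destruct v as [x y z]. destruct eta as [e1 e2 e3']. unfold dot in Hv, He; simpl in Hv, He.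
  replace (fun t => c * legendre k (dot (Rz t (mkV3 x y z)) (mkV3 e1 e2 e3')))
    with (fun t => c * legendre k (z * e3' + (x * e1 + y * e2) * cos t + (x * e2 - y * e1) * sin t)).
  - apply addition. simpl.
    transitivity ((x * x + y * y) * (e1 * e1 + e2 * e2)); [ring|].
    replace (x * x + y * y) with (1 - z * z) by lra.
    replace (e1 * e1 + e2 * e2) with (1 - e3' * e3') by lra. ring.
  - apply functional_extensionality. intro t. unfold Rz, dot; simpl. f_equal. f_equal. ring.
Qed.

Lemma dot_e3 eta : dot e3 eta = v3 eta.
Proof. destruct eta. unfold dot, e3; simpl. ring. Qed.

Lemma avgf_S a m F th : avgf a (S m) F th =
  avgf a m (fun th' => / (2 * PI) * Rint (fun t => F (upd th' (a + S m) t)) 0 (2 * PI)) th.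
Proof. reflexivity. Qed.

Lemma avgf_ext a m F G th : (forall th', F th' = G th') -> avgf a m F th = avgf a m G th.
Proof. intro H. replace F with G; [reflexivity|]. apply functional_extensionality. intro; auto. Qed.

Lemma Rint_ext' f g a b : (forall t, f t = g t) -> Rint f a b = Rint g a b.
Proof. intro H. replace f with g; [reflexivity|]. apply functional_extensionality. intro; auto. Qed.

Lemma e3_unit : dot e3 e3 = 1.
Proof. unfold dot, e3; simpl; ring. Qed.

Lemma tree_main k t : forall j phi eta th0 c, dot eta eta = 1 ->
  avgf 0 (leaves t - 1) (fun th => c * legendre k (dot (mv (Ostar t j phi th) e3) eta)) th0
  = c * legendre k (v3 eta) * fcoef k t j phi.
Proof.
  induction t as [|l IHl r IHr]; intros j phi eta th0 c He.
  - simpl. rewrite mv_Id, dot_e3. ring.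
  - pose proof (leaves_pos l) as Hl. pose proof (leaves_pos r) as Hr.
    rewrite fcoef_node.
    set (nl := leaves l) in *. set (nr := leaves r) in *.
    set (idx := (nl + nr - 1)%nat).
    replace (leaves (Node l r) - 1)%nat with (S ((nl - 1) + (nr - 1))) by (simpl; lia).
    rewrite avgf_S. replace (0 + S (nl - 1 + (nr - 1)))%nat with idx by (unfold idx; lia).
    set (ph := phi idx).
    destruct (Nat.leb j nl) eqn:Ej.
    + set (etaL := mkV3 (sin ph) 0 (cos ph)).
      set (F' := fun th' => (c * legendre k (v3 eta)) *
                 legendre k (dot (mv (Ostar l j phi th') e3) etaL)).
      rewrite (avgf_ext _ _ _ F').
      2: { intro th'. cbv beta.
           rewrite (Rint_ext' _ (fun t => c * legendre k (dot (Rz t (Nl ph (mv (Ostar l j phi th') e3))) eta))).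
           - rewrite root_int; auto.
             + unfold F'. replace (v3 (Nl ph (mv (Ostar l j phi th') e3)))
                 with (dot (mv (Ostar l j phi th') e3) etaL). ring.
               destruct (mv (Ostar l j phi th') e3). unfold Nl, dot, etaL; simpl. ring.
             + rewrite Nl_norm, Ostar_norm. apply e3_unit.
           - intro t.
             rewrite Ostar_node. fold nl nr. fold idx. rewrite Ej.
             rewrite mv_mm, Ostar_upd by (unfold idx; lia).
             unfold upd. rewrite Nat.eqb_refl. rewrite Ml_dec. reflexivity. }
      rewrite avgf_split. simpl (0 + (nl - 1))%nat.
      rewrite (avgf_ext _ _ (avgf (nl - 1) (nr - 1) F') F').
      2: { intro th'. apply avgf_const. intros th'' i x Hi. unfold F'. rewrite Ostar_upd by lia. reflexivity. }
      unfold F'.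
      rewrite IHl.
      2: { unfold etaL, dot; simpl. rewrite <- (sc ph). ring. }
      unfold etaL; simpl. ring.
    + set (etaR := mkV3 0 (cos ph) (sin ph)).
      set (H := fun s => (c * legendre k (v3 eta)) *
                 legendre k (dot (mv (Ostar r (j - nl) (shiftp nl phi) s) e3) etaR)).
      rewrite (avgf_ext _ _ _ (fun th' => H (sh (nl - 1) th'))).
      2: { intro th'. cbv beta.
           rewrite (Rint_ext' _ (fun t => c * legendre k (dot (Rz t (Nr ph (mv (Ostar r (j - nl) (shiftp nl phi) (sh (nl - 1) th')) e3))) eta))).
           - rewrite root_int; auto.
             + unfold H. replace (v3 (Nr ph (mv (Ostar r (j - nl) (shiftp nl phi) (sh (nl - 1) th')) e3)))
                 with (dot (mv (Ostar r (j - nl) (shiftp nl phi) (sh (nl - 1) th')) e3) etaR). ring.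
               destruct (mv (Ostar r (j - nl) (shiftp nl phi) (sh (nl - 1) th')) e3).
               unfold Nr, dot, etaR; simpl. ring.
             + rewrite Nr_norm, Ostar_norm. apply e3_unit.
           - intro t.
             rewrite Ostar_node. fold nl nr. fold idx. rewrite Ej.
             rewrite mv_mm. rewrite shift_upd by (unfold idx; lia).
             rewrite Ostar_upd by (unfold idx; lia).
             unfold upd. rewrite Nat.eqb_refl. rewrite Mr_dec. reflexivity. }
      rewrite avgf_split. simpl (0 + (nl - 1))%nat.
      rewrite (avgf_ext _ _ (avgf (nl - 1) (nr - 1) (fun th' => H (sh (nl - 1) th')))
        (fun _ : nat -> R => (c * legendre k (v3 eta)) * legendre k (v3 etaR) *
                                  fcoef k r (j - nl) (shiftp nl phi))).
      2: { intro th'. rewrite avgf_shift. unfold H.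
           apply IHr.
           unfold etaR, dot; simpl. rewrite <- (sc ph). ring. }
      rewrite avgf_const by auto.
      unfold etaR; simpl. ring.
Qed.

Lemma sq3 x y z : x * x + y * y + z * z = 0 -> x = 0 /\ y = 0 /\ z = 0.
Proof. intro H. repeat split; nra. Qed.

Lemma SO3_tr_norm A x : SO3 A -> dot x x = 1 -> dot (mv (trM A) x) (mv (trM A) x) = 1.
Proof.
  destruct A as [[a b c] [d e f] [g h i]]. intros [H D] Hx.
  unfold mm, trM, col1, col2, col3, dot, Id3 in H. simpl in H.
  injection H. intros H0 H1 H2 H3 H4 H5 H6 H7 H8. clear H. unfold det3 in D. simpl in D.
  assert (S1 : (a - (e*i - h*f)) * (a - (e*i - h*f)) + (d - (h*c - b*i)) * (d - (h*c - b*i))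
             + (g - (b*f - e*c)) * (g - (b*f - e*c)) = 0).
  { transitivity ((a * a + d * d + g * g - 1) - 2 * (a * (e * i - f * h) - b * (d * i - f * g) + c * (d * h - e * g) - 1)
       + (c * c + f * f + i * i) * (b * b + e * e + h * h - 1) + (c * c + f * f + i * i - 1)
       - (b * c + e * f + h * i) * (b * c + e * f + h * i)); [ring|].
    rewrite H8, D, H4, H0, H3. ring. }
  assert (S2 : (b - (f*g - i*d)) * (b - (f*g - i*d)) + (e - (i*a - c*g)) * (e - (i*a - c*g))
             + (h - (c*d - f*a)) * (h - (c*d - f*a)) = 0).
  { transitivity ((b * b + e * e + h * h - 1) - 2 * (a * (e * i - f * h) - b * (d * i - f * g) + c * (d * h - e * g) - 1)
       + (a * a + d * d + g * g) * (c * c + f * f + i * i - 1) + (a * a + d * d + g * g - 1)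
       - (c * a + f * d + i * g) * (c * a + f * d + i * g)); [ring|].
    rewrite H8, D, H4, H0, H2. ring. }
  assert (S3 : (c - (d*h - g*e)) * (c - (d*h - g*e)) + (f - (g*b - a*h)) * (f - (g*b - a*h))
             + (i - (a*e - d*b)) * (i - (a*e - d*b)) = 0).
  { transitivity ((c * c + f * f + i * i - 1) - 2 * (a * (e * i - f * h) - b * (d * i - f * g) + c * (d * h - e * g) - 1)
       + (b * b + e * e + h * h) * (a * a + d * d + g * g - 1) + (b * b + e * e + h * h - 1)
       - (a * b + d * e + g * h) * (a * b + d * e + g * h)); [ring|].
    rewrite H8, D, H4, H0, H7. ring. }
  apply sq3 in S1. apply sq3 in S2. apply sq3 in S3.
  destruct S1 as [Ea [Ed Eg]]. destruct S2 as [Eb [Ee Eh]]. destruct S3 as [Ec [Ef Ei]].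
  assert (a = e*i - h*f) by lra. assert (d = h*c - b*i) by lra. assert (g = b*f - e*c) by lra.
  assert (b = f*g - i*d) by lra. assert (e = i*a - c*g) by lra. assert (h = c*d - f*a) by lra.
  assert (c = d*h - g*e) by lra. assert (f = g*b - a*h) by lra. assert (i = a*e - d*b) by lra.
  assert (R11 : a*a + b*b + c*c = 1).
  { transitivity (a*(a - (e*i - h*f)) + b*(b - (f*g - i*d)) + c*(c - (d*h - g*e)) +
       (a * (e * i - f * h) - b * (d * i - f * g) + c * (d * h - e * g))); [ring|].
    rewrite Ea, Eb, Ec, D. ring. }
  assert (R22 : d*d + e*e + f*f = 1).
  { transitivity (d*(d - (h*c - b*i)) + e*(e - (i*a - c*g)) + f*(f - (g*b - a*h)) +
       (a * (e * i - f * h) - b * (d * i - f * g) + c * (d * h - e * g))); [ring|].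
    rewrite Ed, Ee, Ef, D. ring. }
  assert (R33 : g*g + h*h + i*i = 1).
  { transitivity (g*(g - (b*f - e*c)) + h*(h - (c*d - f*a)) + i*(i - (a*e - d*b)) +
       (a * (e * i - f * h) - b * (d * i - f * g) + c * (d * h - e * g))); [ring|].
    rewrite Eg, Eh, Ei, D. ring. }
  assert (R12 : a*d + b*e + c*f = 0).
  { transitivity (d*(a - (e*i - h*f)) + e*(b - (f*g - i*d)) + f*(c - (d*h - g*e))); [ring|].
    rewrite Ea, Eb, Ec. ring. }
  assert (R13 : a*g + b*h + c*i = 0).
  { transitivity (a*(g - (b*f - e*c)) + b*(h - (c*d - f*a)) + c*(i - (a*e - d*b))); [ring|].
    rewrite Eg, Eh, Ei. ring. }
  assert (R23 : d*g + e*h + f*i = 0).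
  { transitivity (d*(g - (b*f - e*c)) + e*(h - (c*d - f*a)) + f*(i - (a*e - d*b))); [ring|].
    rewrite Eg, Eh, Ei. ring. }
  destruct x as [x1 x2 x3]. unfold mv, trM, col1, col2, col3, dot in *. simpl in *.
  transitivity (x1*x1*(a*a + b*b + c*c) + x2*x2*(d*d + e*e + f*f) + x3*x3*(g*g + h*h + i*i)
     + 2*x1*x2*(a*d + b*e + c*f) + 2*x1*x3*(a*g + b*h + c*i) + 2*x2*x3*(d*g + e*h + f*i)); [ring|].
  rewrite R11, R22, R33, R12, R13, R23. lra.
Qed.

Lemma dot_tr A y x : dot (mv A y) x = dot y (mv (trM A) x).
Proof.
  destruct A as [[a b c] [d e f] [g h i]]. destruct y, x.
  unfold mv, trM, col1, col2, col3, dot; simpl. ring.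
Qed.

Theorem mainTheorem10 (k n j : nat) (t : tree) (phi : nat -> R)
  (u xi : V3) (B : V3 -> M3) :
  leaves t = n ->
  (1 <= j <= n)%nat ->
  (forall i : nat, (1 <= i <= n - 1)%nat -> 0 <= phi i <= PI) ->
  unitv u -> unitv xi ->
  (forall v : V3, unitv v -> SO3 (B v) /\ mv (B v) e3 = v) ->
  avg_iter (n - 1)
    (fun th => legendre k (dot (mv (mm (B u) (Ostar t j phi th)) e3) xi))
  = legendre k (dot u xi) * fcoef k t j phi.
Proof.
  intros Hn Hj Hphi Hu Hxi HB.
  destruct (HB u Hu) as [HSO Hue3].
  rewrite avg_iter_avgf.
  set (eta := mv (trM (B u)) xi).
  transitivity (avgf 0 (n - 1) (fun th => 1 * legendre k (dot (mv (Ostar t j phi th) e3) eta)) (fun _ => 0)).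
  - apply avgf_ext. intro th. rewrite mv_mm, dot_tr. fold eta. ring.
  - subst n. rewrite tree_main.
    2: { apply SO3_tr_norm; auto. }
    replace (v3 eta) with (dot u xi). ring.
    rewrite <- Hue3. unfold eta. destruct (B u) as [[a b c] [d e f] [g h i]]. destruct xi.
    unfold mv, trM, col1, col2, col3, dot, e3; simpl. ring.
Qed.
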